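(* Let $\mathcal C\subseteq\mathbb F_q^n$ be a linear code of dimension $k$ with parity check matrix $H$, and let $\prec$ be an admissible order on $[X]$. Run Algorithm P (described in the context) on $H$. Then the algorithm terminates, and its output $(N,\phi)$ satisfies: $N$ is a set of canonical forms for $\mathcal C$ (properties (C1)–(C4) below), and $\phi$ is defined on all of $N\times X$, takes values in $N$, and satisfies $\xi(\phi(w,x))=\xi(wx)$ for all $w\in N$, $x\in X$.
   Context: Let $p$ be a prime, $q=p^m$, and fix $\alpha\in\mathbb F_q$ a root of an irreducible polynomial of degree $m$ over $\mathbb F_p$, so each element of $\mathbb F_q$ is uniquely $a_0+a_1\alpha+\dots+a_{m-1}\alpha^{m-1}$ with $a_i\in\mathbb F_p$. A linear code $\mathcal C\subseteq\mathbb F_q^n$ of dimension $k$ has a parity check matrix $H$, an $n\times(n-k)$ matrix over $\mathbb F_q$ with $\mathcal C=\{c: cH=0\}$ (vectors are rows). Let $[X]$ be the free commutative monoid on the $nm$ variables $X=\{x_{ij}:1\le i\le n,1\le j\le m\}$ (also written $x_k$, $k=(i-1)m+j$). Let $\psi:[X]\to(\mathbb F_q^n,+)$ be the monoid morphism with $\psi(x_{ij})=\alpha^{j-1}e_i$ ($e_i$ the $i$-th unit vector), i.e. $\psi(\prod x_{ij}^{\beta_{ij}})$ has $i$-th coordinate $\sum_j\beta_{ij}\alpha^{j-1}$ computed in $\mathbb F_q$. Put $\xi(w)=\psi(w)H$ (the syndrome of $w$). For $w\in[X]$ let $\mathrm{Ind}(w)=\{i:\exists j,\ x_{ij}\mid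 w\}$. Given an admissible (monomial) order $\prec$ on $[X]$, the error-vector order is: $u<_e w$ iff $|\mathrm{Ind}(u)|<|\mathrm{Ind}(w)|$, or $|\mathrm{Ind}(u)|=|\mathrm{Ind}(w)|$ and $u\prec w$; it is a total order on $[X]$. A set of canonical forms for $\mathcal C$ is a set $N\subseteq[X]$ with (C1) $1\in N$; (C2) $|N|=q^{n-k}$; (C3) distinct elements of $N$ have distinct syndromes $\xi$; (C4) every $w\in N\setminus\{1\}$ can be written $w=w'x$ with $w'\in N$, $x\in X$. Algorithm P: keep a list $L$ of words sorted increasingly by $<_e$, a set $N$ (initially $L=(1)$, $N=\emptyset$). While $L\neq\emptyset$: remove the $<_e$-smallest word $w$ from $L$. If some $w_j\in N$ has $\xi(w_j)=\xi(w)$, then for each variable $x_k$ with $w=ux_k$ and $u\in N$ set $\phi(u,x_k):=w_j$. Otherwise add $w$ to $N$, insert all products $wx$ ($x\in X$) into $L$ (keeping it sorted), and for each $x_k$ with $w=ux_k$, $u\in N$, set $\phi(u,x_k):=w$. Output $N$ and $\phi$. *)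

(* Defs.v *)
From HB Require Import structures.
From mathcomp Require Import all_boot all_order all_algebra.
Set Implicit Arguments. Unset Strict Implicit. Unset Printing Implicit Defensive.
Import GRing.Theory.
Local Open Scope ring_scope.

(* Monomials of the free commutative monoid [X] on the n*m variables x_{ij},
   represented by exponent vectors; the variable x_{ij} is indexed by (i,j)
   with i : 'I_n (position, 0-based) and j : 'I_m (so x_{ij} <-> alpha^j e_i). *)
Definition mon (n m : nat) := {ffun 'I_n * 'I_m -> nat}.

Section Monoid.
Variables n m : nat.
Definition mone : mon n m := [ffun => 0%N].
Definition mmul (u w : mon n m) : mon n m := [ffun k => (u k + w k)%N].
Definition mvar (k : 'I_n * 'I_m) : mon n m := [ffun k' => nat_of_bool (k' == k)].
(* w / x_k (only meaningful when x_k divides w) *)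
Definition mdivvar (w : mon n m) (k : 'I_n * 'I_m) : mon n m :=
  [ffun k' => (w k' - nat_of_bool (k' == k))%N].
Definition Ind (w : mon n m) : {set 'I_n} := [set i | [exists j : 'I_m, 0 < w (i, j)]%N].

(* admissible (monomial) order, given by its strict part *)
Definition admissible (prec : rel (mon n m)) : Prop :=
  [/\ irreflexive prec, transitive prec,
      (forall u w, u != w -> prec u w || prec w u),
      (forall w, w != mone -> prec mone w) &
      (forall u w v, prec u w -> prec (mmul u v) (mmul w v))].

Definition lt_e (prec : rel (mon n m)) (u w : mon n m) : bool :=
  (#|Ind u| < #|Ind w|)%N || ((#|Ind u| == #|Ind w|) && prec u w).
End Monoid.

Section Syndrome.
Variables (F : fieldType) (n m r : nat) (alpha : F) (H : 'M[F]_(n, r)).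
Definition psi (w : mon n m) : 'rV[F]_n := \row_i \sum_(j < m) (alpha ^+ j) *+ w (i, j).
Definition xi (w : mon n m) : 'rV[F]_r := psi w *m H.
End Syndrome.

Section AlgorithmP.
Variables (F : fieldType) (n m r : nat) (alpha : F) (H : 'M[F]_(n, r)).
Variable prec : rel (mon n m).

Record state := State {
  stL : seq (mon n m);
  stN : seq (mon n m);
  stphi : mon n m -> 'I_n * 'I_m -> option (mon n m) }.

Definition le_e (u w : mon n m) := (u == w) || lt_e prec u w.

Fixpoint insert_sorted (w : mon n m) (L : seq (mon n m)) : seq (mon n m) :=
  match L with
  | [::] => [:: w]
  | y :: L' => if le_e w y then w :: L else y :: insert_sorted w L'
  end.

Definition upd (phi : mon n m -> 'I_n * 'I_m -> option (mon n m))
    (u : mon n m) (k : 'I_n * 'I_m) (v : mon n m) :=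
  fun u' k' => if (u' == u) && (k' == k) then Some v else phi u' k'.

Definition set_preds (N : seq (mon n m)) (w v : mon n m) phi :=
  foldr (fun k ph => if (0 < w k)%N && (mdivvar w k \in N)
                     then upd ph (mdivvar w k) k v else ph)
        phi (enum {: 'I_n * 'I_m}).

Definition stepP (s : state) : state :=
  match stL s with
  | [::] => s
  | w :: L' =>
    let N := stN s in
    match [seq v <- N | xi alpha H v == xi alpha H w] with
    | wj :: _ => State L' N (set_preds N w wj (stphi s))
    | [::] =>
      let N' := rcons N w in
      State (foldr (fun k L => insert_sorted (mmul w (mvar k)) L) L'
                   (enum {: 'I_n * 'I_m}))
            N' (set_preds N' w w (stphi s))
    end
  end.

Definition initP : state := State [:: mone n m] [::] (fun _ _ => None).

Definition runP (t : nat) : state := iter t stepP initP.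

Definition canonical_forms (q : nat) (N : seq (mon n m)) : Prop :=
  [/\ mone n m \in N,
      size (undup N) = (q ^ r)%N,
      {in N &, forall u w, xi alpha H u = xi alpha H w -> u = w} &
      (forall w, w \in N -> w != mone n m ->
         exists w', exists x, w' \in N /\ w = mmul w' (mvar x))].
End AlgorithmP.

(* Main.v *)
Require Import Defs.
From HB Require Import structures.
From mathcomp Require Import all_boot all_order all_algebra all_field.
From mathcomp Require Import zify.
Import GRing.Theory.
Local Open Scope ring_scope.
Set Implicit Arguments. Unset Strict Implicit.
Section Fp.
Variables (p : nat) (hp : prime p) (F : finFieldType) (hchar : p \in [pchar F]).

Definition fp (c : 'F_p) : F := (nat_of_ord c)%:R.

Lemma fp_nat n : fp (n%:R) = n%:R.
Proof.
rewrite /fp val_Fp_nat // {2}(divn_eq n p) natrD natrM.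
by rewrite (GRing.pcharf0 hchar) mulr0 add0r.
Qed.

Lemma fp_val (c : 'F_p) : c = (nat_of_ord c)%:R.
Proof. by apply: val_inj; rewrite /= val_Fp_nat // modn_small // -{2}(Fp_cast hp). Qed.

Lemma fpD a b : fp (a + b) = fp a + fp b.
Proof. by rewrite {1}(fp_val a) {1}(fp_val b) -natrD fp_nat natrD. Qed.

Lemma fp_zmod : zmod_morphism fp.
Proof.
move=> a b; have := fpD (a - b) b; rewrite subrK => ->; by rewrite addrK.
Qed.

Lemma fp_monoid : monoid_morphism fp.
Proof.
split; first exact: (fp_nat 1).
by move=> a b; rewrite {1}(fp_val a) {1}(fp_val b) -natrM fp_nat natrM.
Qed.

HB.instance Definition _ := GRing.isZmodMorphism.Build _ _ fp fp_zmod.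
HB.instance Definition _ := GRing.isMonoidMorphism.Build _ _ fp fp_monoid.


Lemma span_alpha (m : nat) (hcard : #|F| = (p ^ m)%N) (alpha : F)
  (P : {poly 'F_p}) (irrP : irreducible_poly P) (sP : size P = m.+1)
  (rP : root (map_poly fp P) alpha) :
  exists b : F -> 'I_m -> nat, forall c, c = \sum_(j < m) alpha ^+ j *+ b c j.
Proof.
pose g (b : {ffun 'I_m -> 'F_p}) : F := \sum_(j < m) fp (b j) * alpha ^+ j.
have ginj : injective g.
  move=> b1 b2 e.
  pose d := fun j : nat => oapp (fun o : 'I_m => b1 o - b2 o) 0 (insub j).
  have dE : forall o : 'I_m, d o = b1 o - b2 o by move=> o; rewrite /d valK.
  pose Q := \poly_(j < m) d j.
  have hQ : (map_poly fp Q).[alpha] = 0.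
    have -> : map_poly fp Q = \poly_(j < m) fp (d j).
      apply/polyP => i; rewrite coef_map /= !coef_poly.
      by case: ifP => _ //; rewrite rmorph0.
    rewrite horner_poly.
    under eq_bigr => j _ do rewrite dE rmorphB mulrBl.
    by rewrite sumrB -/(g b1) -/(g b2) e subrr.
  have Q0 : Q = 0.
    apply/eqP; apply/negPn/negP => Qn0.
    pose G := gcdp P Q.
    have Gn0 : G != 0 by rewrite gcdp_eq0 negb_and Qn0 orbT.
    have rG : root (map_poly fp G) alpha.
      by rewrite gcdp_map root_gcd rP /root hQ eqxx.
    have sG : size G != 1%N.
      rewrite -(size_map_poly fp G).
      have := root_size_gt1 _ rG.
      rewrite map_poly_eq0 Gn0 => /(_ isT).
      by case: (size _) => [|[|]].
    have GP : G %= P := irrP G sG (dvdp_gcdl P Q).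
    have PQ : P %| Q by rewrite -(eqp_dvdl _ GP) dvdp_gcdr.
    have := dvdp_leq Qn0 PQ; rewrite sP.
    have := size_poly m d.
    rewrite -/Q => h1 h2; have := leq_trans h2 h1; by rewrite ltnn.
  apply/ffunP => j; apply/eqP; rewrite -subr_eq0.
  have := coef_poly m d j.
  by rewrite -/Q Q0 coef0 ltn_ord dE => <-.
have gbij : bijective g.
  apply: inj_card_bij => //.
  by rewrite card_ffun card_Fp // card_ord hcard.
case: gbij => h _ hK.
exists (fun c j => nat_of_ord (h c j)) => c.
rewrite -{1}(hK c) /g; apply: eq_bigr => j _.
by rewrite /fp mulr_natl.
Qed.
End Fp.

Section Mon.
Variables n m : nat.
Implicit Types u w : mon n m.

Lemma mdivK w k : (0 < w k)%N -> mmul (mdivvar w k) (mvar k) = w.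
Proof.
move=> h; apply/ffunP => k'; rewrite !ffunE.
case: eqVneq => [->|_] /=; last by rewrite !subn0 addn0.
by rewrite subn1 addn1 prednK.
Qed.

Lemma mulvK u k : mdivvar (mmul u (mvar k)) k = u.
Proof.
apply/ffunP => k'; rewrite !ffunE; case: eqVneq => _ /=; by rewrite ?addnK ?addn0 ?subn0.
Qed.

Lemma mulv_pos u k : (0 < mmul u (mvar k) k)%N.
Proof. by rewrite !ffunE eqxx addn1. Qed.

Lemma mulv_neq1 u k : mmul u (mvar k) != mone n m.
Proof. by apply/eqP => /ffunP /(_ k); rewrite !ffunE eqxx addn1. Qed.

Lemma mem_insert (prec : rel (mon n m)) x y (L : seq (mon n m)) :
  (x \in insert_sorted prec y L) = (x == y) || (x \in L).
Proof.
elim: L => [|z L IH] //=; case: ifP => _; rewrite !in_cons // IH.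
by rewrite orbCA.
Qed.

Lemma size_insert (prec : rel (mon n m)) y (L : seq (mon n m)) : size (insert_sorted prec y L) = (size L).+1.
Proof. by elim: L => [|z L IH] //=; case: ifP => _ //=; rewrite IH. Qed.

Lemma mem_inserts (prec : rel (mon n m)) w (L : seq (mon n m)) (ks : seq ('I_n * 'I_m)) x :
  (x \in foldr (fun k L => insert_sorted prec (mmul w (mvar k)) L) L ks) =
  (x \in L) || has (fun k => x == mmul w (mvar k)) ks.
Proof.
elim: ks => [|k ks IH] /=; first by rewrite orbF.
by rewrite mem_insert IH orbCA.
Qed.

Lemma size_inserts (prec : rel (mon n m)) w (L : seq (mon n m)) (ks : seq ('I_n * 'I_m)) :
  size (foldr (fun k L => insert_sorted prec (mmul w (mvar k)) L) L ks) =
  (size L + size ks)%N.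
Proof. elim: ks => [|k ks IH] /=; by rewrite ?addn0 // size_insert IH addnS. Qed.

Lemma set_preds_aux (N : seq (mon n m)) w v (phi : mon n m -> _ -> option (mon n m)) u k (ks : seq ('I_n * 'I_m)) :
  foldr (fun k ph => if (0 < w k)%N && (mdivvar w k \in N)
                     then upd ph (mdivvar w k) k v else ph) phi ks u k =
  if (k \in ks) && [&& (0 < w k)%N, mdivvar w k \in N & u == mdivvar w k]
  then Some v else phi u k.
Proof.
elim: ks => [|k0 ks IH] //=.
rewrite in_cons; case: (k =P k0) => [ek|nk] /=.
- subst k0; case: ifP => c.
  + rewrite /upd IH; case: (u =P mdivvar w k) => [->|nu]; first by rewrite !eqxx /=; case/andP: c => -> ->.
    by rewrite /= !andbF.
  + rewrite IH /=; case/nandP: (negbT c) => /negbTE ->; by rewrite ?andbF.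
- case: ifP => c; rewrite ?/upd IH //.
  by have /eqP nk' := nk; rewrite (negbTE nk') andbF.
Qed.

Lemma set_predsE (N : seq (mon n m)) w v (phi : mon n m -> _ -> option (mon n m)) u k :
  set_preds N w v phi u k =
  if [&& (0 < w k)%N, mdivvar w k \in N & u == mdivvar w k] then Some v
  else phi u k.
Proof. by rewrite /set_preds set_preds_aux mem_enum. Qed.
End Mon.

Section Alg.
Variables (F : finFieldType) (n m r : nat) (alpha : F) (H : 'M[F]_(n, r)).
Variable prec : rel (mon n m).
Local Notation xi := (xi alpha H).
Local Notation mone := (mone n m).

Lemma psi_mul (u w : mon n m) : psi alpha (mmul u w) = psi alpha u + psi alpha w.
Proof.
apply/rowP => i; rewrite !mxE -big_split /=; apply: eq_bigr => j _.
by rewrite ffunE mulrnDr.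
Qed.

Lemma xi_mul (u w : mon n m) : xi (mmul u w) = xi u + xi w.
Proof. by rewrite /xi psi_mul mulmxDl. Qed.

Record Inv (s : state n m) : Prop := {
  iuniq : uniq (stN s);
  iinj : {in stN s &, forall u w, xi u = xi w -> u = w};
  iL : forall w, w \in stL s ->
         w = mone \/ exists w' x, w' \in stN s /\ w = mmul w' (mvar x);
  iN : forall w, w \in stN s ->
         w = mone \/ exists w' x, w' \in stN s /\ w = mmul w' (mvar x);
  iphi : forall u k v, stphi s u k = Some v ->
         v \in stN s /\ xi v = xi (mmul u (mvar k));
  idef : forall u k, u \in stN s ->
         stphi s u k <> None \/ mmul u (mvar k) \in stL s;
  ione : mone \in stN s \/ (stN s = [::] /\ stL s = [:: mone]) }.

Lemma Inv_init : Inv (initP n m).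
Proof.
split => //=; first by move=> w; rewrite inE => /eqP ->; left.
by right.
Qed.

Lemma Inv_step s : Inv s -> Inv (stepP alpha H prec s).
Proof.
case: s => L N phi [/= Iu Ii IL IN Iphi Idef Ione].
rewrite /stepP /=; case: L => [|w L'] /= in IL Idef Ione *; first by split.
case E: [seq v <- N | xi v == xi w] => [|wj rest].
- have nw : forall v, v \in N -> xi v != xi w.
    move=> v vN; apply/negP => e.
    have : v \in [seq v <- N | xi v == xi w] by rewrite mem_filter e.
    by rewrite E.
  have wN : w \notin N by apply/negP => /nw; rewrite eqxx.
  have Nsub : forall x, x \in N -> x \in rcons N w.
    by move=> x; rewrite mem_rcons inE orbC => ->.
  split => /=.
  + by rewrite rcons_uniq wN.
  + move=> u v; rewrite !mem_rcons !inE.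
    case/orP => [/eqP->|uN]; case/orP => [/eqP->|vN] //.
    * by move=> e; have := nw _ vN; rewrite e eqxx.
    * by move=> e; have := nw _ uN; rewrite e eqxx.
    * exact: Ii.
  + move=> x; rewrite mem_inserts => /orP[xL|/hasP[k _ /eqP ->]].
    * case: (IL x); first by rewrite inE xL orbT.
        by left.
      by move=> [w' [y [w'N ->]]]; right; exists w', y; split => //; exact: Nsub.
    * right; exists w, k; split => //; by rewrite mem_rcons mem_head.
  + move=> x; rewrite mem_rcons inE => /orP[/eqP ->|xN].
    * case: (IL w (mem_head _ _)); first by left.
      by move=> [w' [y [w'N e]]]; right; exists w', y; split => //; exact: Nsub.
    * case: (IN x xN); first by left.
      by move=> [w' [y [w'N ->]]]; right; exists w', y; split => //; exact: Nsub.
  + move=> u k v; rewrite set_predsE; case: ifP.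
    * case/and3P => wk _ /eqP -> [<-]; rewrite mdivK //.
      by rewrite mem_rcons mem_head.
    * by move=> _ /Iphi [vN ->]; split => //; exact: Nsub.
  + move=> u k; rewrite mem_rcons inE => /orP[/eqP ->|uN].
    * right; rewrite mem_inserts; apply/orP; right.
      by apply/hasP; exists k; rewrite ?mem_enum.
    * rewrite set_predsE.
      case: (Idef u k uN) => [h|].
        by left; case: ifP.
      rewrite inE => /orP[/eqP e|h].
      - by left; subst w; rewrite mulv_pos mulvK (Nsub u uN) eqxx.
      - right; rewrite mem_inserts h //.
  + case: Ione => [h|[eN eL]]; left; first exact: Nsub.
    by move: eL => [->]; rewrite mem_rcons mem_head.
- have : wj \in [seq v <- N | xi v == xi w] by rewrite E mem_head.
  rewrite mem_filter => /andP[/eqP ewj wjN].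
  split => //=.
  + by move=> x xL; apply: IL; rewrite inE xL orbT.
  + move=> u k v; rewrite set_predsE; case: ifP.
    * case/and3P => wk _ /eqP -> [<-]; rewrite mdivK //.
    * by move=> _ /Iphi.
  + move=> u k uN; rewrite set_predsE.
    case: (Idef u k uN) => [h|].
      by left; case: ifP.
    rewrite inE => /orP[/eqP e|h].
    * by left; rewrite -e mulv_pos mulvK uN eqxx.
    * by right.
  + case: Ione => [h|[eN eL]]; first by left.
    by move: E; rewrite eN.
Qed.

Definition mu (s : state n m) : nat :=
  (size (stL s) + #|{: 'I_n * 'I_m}|.+1 * (#|{: 'rV[F]_r}| - size (stN s)))%N.

Lemma sizeN_bound s : Inv s -> (size (stN s) <= #|{: 'rV[F]_r}|)%N.
Proof.
move=> hs; rewrite -(size_map xi).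
have u : uniq (map xi (stN s)) by rewrite (map_inj_in_uniq (iinj hs)) (iuniq hs).
by rewrite -(card_uniqP u); exact: max_card.
Qed.

Lemma mu_step s : Inv s -> stL s != [::] -> (mu (stepP alpha H prec s) < mu s)%N.
Proof.
move=> hs; have hb := sizeN_bound (Inv_step hs); move: hb.
case: s hs => L N phi hs; rewrite /mu /stepP /=; case: L hs => [|w L'] hs //= hb _.
move: hb; case: [seq v <- N | xi v == xi w] => [|wj rest] /=; last first.
  by move=> _; rewrite addSn.
rewrite size_inserts size_rcons -cardE => hb.
move: hb; set C := #|{: 'rV[F]_r}|; set A := #|{: 'I_n * 'I_m}|. clearbody C A; move: (size N) (size L') => b c h; have -> : (C - b = (C - b.+1).+1)%N by lia. rewrite mulnS; lia.
Qed.

Lemma run_term : exists t, stL (runP alpha H prec t) = [::].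
Proof.
have inv : forall t, Inv (runP alpha H prec t).
  by elim => [|t IH]; [exact: Inv_init | exact: Inv_step].
have key : forall t, stL (runP alpha H prec t) = [::] \/
   (t + mu (runP alpha H prec t) <= mu (initP n m))%N.
  elim => [|t IH]; first by right.
  case: IH => [e|le]; first by left; rewrite /runP iterS -/(runP _ _ _ t) /stepP e.
  case E: (stL (runP alpha H prec t)) => [|w L]; first by left; rewrite /runP iterS -/(runP _ _ _ t) /stepP E.
  right; have := mu_step (inv t); rewrite E => /(_ isT).
  rewrite /runP iterS -/(runP _ _ _ t); lia.
exists (mu (initP n m)).+1; case: (key (mu (initP n m)).+1) => // ; lia.
Qed.

Lemma reach s : Inv s -> stL s = [::] ->
  forall w : mon n m, exists v, v \in stN s /\ xi v = xi w.
Proof.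
move=> hs eL.
have oneN : mone \in stN s by case: (ione hs) => [//|[_]]; rewrite eL.
suff: forall N0 (w : mon n m), (\sum_k w k < N0)%N ->
   exists v, v \in stN s /\ xi v = xi w by move=> h w; exact: h _ w (ltnSn _).
elim => [//|N0 IH] w hw.
case: (eqVneq w mone) => [->|wn1]; first by exists mone.
have [k wk] : exists k, (0 < w k)%N.
  apply/existsP; apply: contraR wn1 => /existsPn h.
  apply/eqP/ffunP => k; rewrite ffunE; have := h k; by case: (w k).
have ew := mdivK wk.
have [v [vN ev]] : exists v, v \in stN s /\ xi v = xi (mdivvar w k).
  apply: IH; move: hw; rewrite -{1}ew.
  rewrite (eq_bigr (fun k' => mdivvar w k k' + mvar k k'))%N; last by move=> k' _; rewrite ffunE.
  rewrite big_split /=.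
  have -> : (\sum_k' (mvar k : mon n m) k' = 1)%N.
    rewrite (bigD1 k) //= big1 ?ffunE ?eqxx //.
    by move=> k' nk; rewrite ffunE (negbTE nk).
  by rewrite addn1 ltnS.
case: (idef hs k vN); last by rewrite eL.
case E: (stphi s v k) => [v'|] // _.
case: (iphi hs E) => v'N ev'; exists v'; split => //.
by rewrite ev' -ew !xi_mul ev.
Qed.
End Alg.

Lemma Inv_run (F : finFieldType) n m r (alpha : F) (H : 'M_(n, r)) (prec : rel (mon n m)) t :
  Inv alpha H (runP alpha H prec t).
Proof. by elim: t => [|t IH]; [exact: Inv_init | exact: Inv_step]. Qed.

Theorem theorem1p8
  (p m : nat) (hp : prime p) (hm : (0 < m)%N)
  (F : finFieldType) (hcard : #|F| = (p ^ m)%N) (hchar : p \in [pchar F])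
  (alpha : F)
  (halpha : exists P : {poly 'F_p}, [/\ irreducible_poly P, size P = m.+1 &
              root (map_poly (fun c : 'F_p => (nat_of_ord c)%:R : F) P) alpha])
  (n k : nat) (hk : (k <= n)%N)
  (H : 'M[F]_(n, n - k)) (hrank : \rank H = (n - k)%N)
  (prec : rel (mon n m)) (hprec : admissible prec) :
  exists t : nat,
    let s := runP alpha H prec t in
    [/\ stL s = [::],
        canonical_forms alpha H (p ^ m)%N (stN s) &
        forall (w : mon n m) (x : 'I_n * 'I_m), w \in stN s ->
          exists v, [/\ stphi s w x = Some v, v \in stN s &
                        xi alpha H v = xi alpha H (mmul w (mvar x))]].
Proof.
case: halpha => P [irrP sP rP].
have [b hb] := span_alpha hp hchar hcard irrP sP rP.
have surj : forall y : 'rV[F]_(n - k), exists w : mon n m, xi alpha H w = y.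
  have : row_full H by rewrite /row_full hrank.
  case/row_fullP => B hB y.
  pose v := y *m B.
  exists [ffun ij : 'I_n * 'I_m => b (v 0 ij.1) ij.2].
  rewrite /xi; have -> : psi alpha [ffun ij : 'I_n * 'I_m => b (v 0 ij.1) ij.2] = v.
    apply/rowP => i; rewrite [in RHS](hb (v 0 i)) mxE; apply: eq_bigr => j _.
    by rewrite ffunE.
  by rewrite /v -mulmxA hB mulmx1.
have [t ht] := run_term alpha H prec.
exists t => s.
have hs : Inv alpha H s := Inv_run alpha H prec t.
have hr := reach hs ht.
split => //.
- split.
  + by case: (ione hs) => [//|[_]]; rewrite ht.
  + rewrite undup_id ?(iuniq hs) // -(size_map (xi alpha H)).
    have u : uniq (map (xi alpha H) (stN s)).
      by rewrite (map_inj_in_uniq (iinj hs)) (iuniq hs).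
    rewrite -(card_uniqP u); apply/eqP; rewrite eqn_leq.
    have hc : #|{: 'rV[F]_(n - k)}| = ((p ^ m) ^ (n - k))%N by rewrite card_mx mul1n hcard.
    rewrite -hc max_card /=.
    apply: subset_leq_card; apply/subsetP => y _.
    have [w hw] := surj y; have [v [vN ev]] := hr w.
    by apply/mapP; exists v => //; rewrite ev hw.
  + exact: (iinj hs).
  + move=> w wN wn1; case: (iN hs wN) => // e; by rewrite e eqxx in wn1.
- move=> w x wN.
  case: (idef hs x wN); last by rewrite ht.
  case E: (stphi s w x) => [v|] // _.
  case: (iphi hs E) => vN ev; exists v; split => //.
Qed.
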